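(* Let $\Lambda$ be a left-artinian ring, $\mathcal{C}=\mathrm{mod}(\Lambda)$, let $\mathcal{S}$ be a set of (isoclasses of) simple $\Lambda$-modules, $\mathcal{S}'$ the set of simple $\Lambda$-modules not in $\mathcal{S}$, and let $(\mathcal{T}_{\mathcal{S}},\mathcal{X}_{\mathcal{S}},\mathcal{F}_{\mathcal{S}})$ be the ttf-theory generated by $\mathcal{S}$. Then: (a) $\mathcal{T}_{\mathcal{S}}=\{M\in\mathcal{C}:\mathrm{top}(M)\in\mathrm{add}(\mathcal{S}')\}$; (b) $\mathcal{F}_{\mathcal{S}}=\{M\in\mathcal{C}:\mathrm{soc}(M)\in\mathrm{add}(\mathcal{S}')\}$; (c) if $M\in\mathcal{T}_{\mathcal{S}}$ then the projective cover of $M$ lies in $\mathcal{T}_{\mathcal{S}}$; (d) $I_{\mathcal{S}}:=t_{\mathcal{S}}({}_\Lambda\Lambda)$ is a two-sided ideal of $\Lambda$ and $t_{\mathcal{S}}(M)=I_{\mathcal{S}}M$ for every $M\in\mathcal{C}$.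
   Context: $\mathcal{C}$ is the category of finitely generated left $\Lambda$-modules; $\mathrm{top}(M)=M/\mathrm{rad}(M)$; $\mathrm{add}(\mathcal{S}')$ is the class of finite direct sums of modules in $\mathcal{S}'$. $\mathcal{X}_{\mathcal{S}}$ is the class of $\mathcal{S}$-filtered modules: $M$ with a finite chain $0=M_0\subseteq\cdots\subseteq M_m=M$ of submodules each of whose factors $M_i/M_{i-1}$ is isomorphic to a module in $\mathcal{S}$. The ttf-theory generated by $\mathcal{S}$ is given by $\mathcal{T}_{\mathcal{S}}=\{M:\mathrm{Hom}_\Lambda(M,X)=0\ \forall X\in\mathcal{X}_{\mathcal{S}}\}$ and $\mathcal{F}_{\mathcal{S}}=\{M:\mathrm{Hom}_\Lambda(X,M)=0\ \forall X\in\mathcal{X}_{\mathcal{S}}\}$, so that $(\mathcal{T}_{\mathcal{S}},\mathcal{X}_{\mathcal{S}})$ and $(\mathcal{X}_{\mathcal{S}},\mathcal{F}_{\mathcal{S}})$ are torsion theories. $t_{\mathcal{S}}(M)$ is the trace of $\mathcal{T}_{\mathcal{S}}$ in $M$, i.e. the submodule generated by images of all maps $T\to M$ with $T\in\mathcal{T}_{\mathcal{S}}$. *)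

(* Defs.v *)
From HB Require Import structures.
From mathcomp Require Import all_boot all_order all_algebra.
Set Implicit Arguments. Unset Strict Implicit. Unset Printing Implicit Defensive.
Import GRing.Theory.
Local Open Scope ring_scope.

Section ModuleTheory.
Variable R : nzRingType.

Definition submod (M : lmodType R) (U : M -> Prop) : Prop :=
  [/\ U 0, (forall x y, U x -> U y -> U (x + y)) &
      (forall (r : R) x, U x -> U (r *: x))].

Definition fg (M : lmodType R) : Prop :=
  exists s : seq M, forall m : M,
    exists c : 'I_(size s) -> R, m = \sum_(i < size s) c i *: s`_i.

Definition left_artinian : Prop :=
  forall L : nat -> R^o -> Prop,
    (forall n, submod (L n)) ->
    (forall n x, L n.+1 x -> L n x) ->
    exists N, forall n, (N <= n)%N -> forall x, L n x <-> L N x.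

Definition simple_mod (M : lmodType R) : Prop :=
  (exists x : M, x != 0) /\
  forall U : M -> Prop, submod U ->
    (forall x, U x -> x = 0) \/ (forall x, U x).

Definition mod_iso (M N : lmodType R) : Prop :=
  exists f : {linear M -> N}, bijective f.

(* the subquotient A/B (B ⊆ A submodules of M) is isomorphic to X *)
Definition subquot_iso (M : lmodType R) (A B : M -> Prop) (X : lmodType R) :=
  exists f : M -> X,
    [/\ (forall x y, A x -> A y -> f (x + y) = f x + f y),
        (forall (r : R) x, A x -> f (r *: x) = r *: f x),
        (forall z, exists2 x, A x & f x = z) &
        (forall x, A x -> (f x = 0 <-> B x))].

Variable S : lmodType R -> Prop.

Definition filtered (M : lmodType R) : Prop :=
  exists (m : nat) (C : nat -> M -> Prop),
    [/\ (forall i, submod (C i)),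
        (forall x, C 0%N x <-> x = 0),
        (forall x, C m x),
        (forall i x, C i x -> C i.+1 x) &
        (forall i, (i < m)%N ->
           exists2 Y, S Y & subquot_iso (C i.+1) (C i) Y)].

Definition XS (M : lmodType R) : Prop := fg M /\ filtered M.

Definition hom_zero (M N : lmodType R) : Prop :=
  forall (f : {linear M -> N}) (m : M), f m = 0.

(* torsion class T_S and torsion-free class F_S (as conditions on M;
   membership in C = mod(R) additionally requires fg M) *)
Definition TS (M : lmodType R) : Prop :=
  forall X : lmodType R, XS X -> hom_zero M X.
Definition FS (M : lmodType R) : Prop :=
  forall X : lmodType R, XS X -> hom_zero X M.

Definition Scompl (X : lmodType R) : Prop :=
  simple_mod X /\ ~ (exists2 Y, S Y & mod_iso X Y).

End ModuleTheory.

Section Structure.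
Variable R : nzRingType.

(* the submodule P of N is isomorphic to a finite direct sum of modules in C *)
Definition in_add (C : lmodType R -> Prop) (N : lmodType R) (P : N -> Prop) :=
  exists (n : nat) (X : 'I_n -> lmodType R) (iota : forall i, {linear X i -> N}),
    [/\ (forall i, C (X i)),
        (forall i x, P (iota i x)),
        (forall y, P y -> exists x : forall i, X i, y = \sum_(i < n) iota i (x i)) &
        (forall x x' : forall i, X i,
           \sum_(i < n) iota i (x i) = \sum_(i < n) iota i (x' i) ->
           forall i, x i = x' i)].

Definition maximal_submod (M : lmodType R) (U : M -> Prop) : Prop :=
  [/\ submod U, (exists x, ~ U x) &
      forall V : M -> Prop, submod V -> (forall x, U x -> V x) ->
        (forall x, V x <-> U x) \/ (forall x, V x)].

Definition rad (M : lmodType R) (x : M) : Prop :=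
  forall U, maximal_submod U -> U x.

Definition simple_submod (M : lmodType R) (U : M -> Prop) : Prop :=
  [/\ submod U, (exists2 x, U x & x != 0) &
      forall V : M -> Prop, submod V -> (forall x, V x -> U x) ->
        (forall x, V x -> x = 0) \/ (forall x, V x <-> U x)].

Definition soc (M : lmodType R) (y : M) : Prop :=
  exists (n : nat) (U : 'I_n -> M -> Prop) (x : 'I_n -> M),
    [/\ (forall i, simple_submod (U i)), (forall i, U i (x i)) &
        y = \sum_(i < n) x i].

Definition top_in_add (C : lmodType R -> Prop) (M : lmodType R) : Prop :=
  exists (N : lmodType R) (pi : {linear M -> N}),
    [/\ (forall z, exists x, pi x = z),
        (forall x, pi x = 0 <-> rad x) &
        in_add C (fun _ : N => True)].

Definition soc_in_add (C : lmodType R -> Prop) (M : lmodType R) : Prop :=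
  in_add C (@soc M).

Definition projective (P : lmodType R) : Prop :=
  forall (A B : lmodType R), fg A -> fg B ->
  forall g : {linear A -> B}, (forall b, exists a, g a = b) ->
  forall f : {linear P -> B}, exists h : {linear P -> A}, forall p, g (h p) = f p.

(* projective cover pi : P -> M (superfluous kernel) *)
Definition projective_cover (P M : lmodType R) (pi : {linear P -> M}) : Prop :=
  [/\ fg P, projective P, (forall m, exists p, pi p = m) &
      forall U : P -> Prop, submod U ->
        (forall p, exists u k, [/\ U u, pi k = 0 & p = u + k]) ->
        forall p, U p].

Definition trace (S : lmodType R -> Prop) (M : lmodType R) (y : M) : Prop :=
  exists (n : nat) (T : 'I_n -> lmodType R) (f : forall i, {linear T i -> M})
         (t : forall i, T i),
    [/\ (forall i, fg (T i)), (forall i, TS S (T i)) &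
        y = \sum_(i < n) f i (t i)].

Definition two_sided_ideal (I : R -> Prop) : Prop :=
  [/\ I 0, (forall x y, I x -> I y -> I (x + y)),
      (forall a x, I x -> I (a * x)) & (forall a x, I x -> I (x * a))].

Definition ideal_times (I : R -> Prop) (M : lmodType R) (y : M) : Prop :=
  exists (n : nat) (r : 'I_n -> R) (m : 'I_n -> M),
    (forall i, I (r i)) /\ y = \sum_(i < n) r i *: m i.

End Structure.

Definition IS (R : nzRingType) (S : lmodType R -> Prop) : R -> Prop :=
  fun r : R => @trace R S R^o r.

(* Main.v *)
Require Import Defs.
From HB Require Import structures.
From mathcomp Require Import all_boot all_order all_algebra.
From Stdlib Require Import ClassicalEpsilon Classical FunctionalExtensionality PropExtensionality.
From mathcomp Require classical_sets.
Set Implicit Arguments. Unset Strict Implicit. Unset Printing Implicit Defensive.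
Import GRing.Theory.
Local Open Scope ring_scope.

Section Lin.
Variables (R : nzRingType) (A B : lmodType R) (f : A -> B).
Hypothesis fD : forall x y, f (x + y) = f x + f y.
Hypothesis fZ : forall (r : R) x, f (r *: x) = r *: f x.
Lemma mkLin_proof : linear f.
Proof. by move=> a u v; rewrite fD fZ. Qed.
Definition mkLin : {linear A -> B} :=
  HB.pack f (GRing.isLinear.Build R A B *:%R f mkLin_proof).
Lemma mkLinE x : mkLin x = f x. Proof. by []. Qed.
End Lin.

Section Quot.
Variables (R : nzRingType) (M : lmodType R) (U : M -> Prop) (HU : submod U).
Definition qrep (x : M) : M := epsilon (inhabits 0) (fun z => U (x - z)).
Lemma qrepP x : U (x - qrep x).
Proof. rewrite /qrep; apply: (epsilon_spec (inhabits (0:M)) (fun z => U (x - z))); exists x; rewrite subrr. by case: HU. Qed.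
Lemma Uopp x : U x -> U (- x).
Proof. case: HU => _ _ hZ h. by rewrite -scaleN1r; apply: hZ. Qed.
Lemma Uadd x y : U x -> U y -> U (x + y).
Proof. by case: HU => _ hD _; apply: hD. Qed.
Lemma qrep_eq x y : U (x - y) -> qrep x = qrep y.
Proof.
move=> h; rewrite /qrep; f_equal; apply: functional_extensionality => z.
apply: propositional_extensionality; split => hz.
- by have := Uadd (Uopp h) hz; rewrite opprB addrA subrK.
- by have := Uadd h hz; rewrite addrA subrK.
Qed.
Lemma qrep_id x : qrep (qrep x) = qrep x.
Proof. apply: qrep_eq. have := Uopp (qrepP x). by rewrite opprB. Qed.
Lemma U0 : U 0. Proof. by case: HU. Qed.
Lemma UZ r x : U x -> U (r *: x). Proof. by case: HU => _ _; apply. Qed.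
Lemma Usub x y : U x -> U y -> U (x - y). Proof. by move=> hx hy; apply: Uadd => //; apply: Uopp. Qed.

Definition quot_of of submod U := {x : M | qrep x == x}.
Local Notation quot := (quot_of HU).
HB.instance Definition _ := Choice.on quot.
Definition qpi (x : M) : quot := exist _ (qrep x) (introT eqP (qrep_id x)).
Lemma qpi_val (q : quot) : qpi (val q) = q.
Proof. case: q => x hx; apply: val_inj => /=. exact/eqP. Qed.
Lemma qpi_eq x y : U (x - y) -> qpi x = qpi y.
Proof. by move=> h; apply: val_inj => /=; apply: qrep_eq. Qed.
Lemma qpi_eqP x y : qpi x = qpi y <-> U (x - y).
Proof.
split; last exact: qpi_eq.
move=> /(congr1 val) /= e.
have h1 := qrepP x; have h2 := qrepP y.
have := Uadd h1 (Uopp h2). by rewrite e opprB addrA subrK.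
Qed.
Lemma quot_ind (P : quot -> Prop) : (forall x, P (qpi x)) -> forall q, P q.
Proof. by move=> h q; rewrite -(qpi_val q). Qed.

Definition qadd (a b : quot) := qpi (val a + val b).
Definition qopp (a : quot) := qpi (- val a).
Definition qscale (r : R) (a : quot) := qpi (r *: val a).
Definition qzero := qpi 0.
Lemma Uval x : U (val (qpi x) - x).
Proof. have := Uopp (qrepP x). by rewrite opprB. Qed.
Lemma qaddE x y : qadd (qpi x) (qpi y) = qpi (x + y).
Proof. apply: qpi_eq. have := Uadd (Uval x) (Uval y). by rewrite addrACA opprD. Qed.
Lemma qoppE x : qopp (qpi x) = qpi (- x).
Proof. apply: qpi_eq. have := Uopp (Uval x). by rewrite opprB opprK addrC. Qed.
Lemma qscaleE r x : qscale r (qpi x) = qpi (r *: x).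
Proof. apply: qpi_eq. have := UZ r (Uval x). by rewrite scalerBr. Qed.

Lemma qaddA : associative qadd.
Proof. by elim/quot_ind => x; elim/quot_ind => y; elim/quot_ind => z; rewrite !qaddE addrA. Qed.
Lemma qaddC : commutative qadd.
Proof. by elim/quot_ind => x; elim/quot_ind => y; rewrite !qaddE addrC. Qed.
Lemma qadd0 : left_id qzero qadd.
Proof. by elim/quot_ind => x; rewrite /qzero qaddE add0r. Qed.
Lemma qaddN : left_inverse qzero qopp qadd.
Proof. by elim/quot_ind => x; rewrite qoppE qaddE addNr. Qed.
HB.instance Definition _ := GRing.isZmodule.Build quot qaddA qaddC qadd0 qaddN.
Lemma qscaleA a b v : qscale a (qscale b v) = qscale (a * b) v.
Proof. by elim/quot_ind: v => x; rewrite !qscaleE scalerA. Qed.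
Lemma qscale1 : left_id 1 qscale.
Proof. by elim/quot_ind => x; rewrite qscaleE scale1r. Qed.
Lemma qscaleDr : right_distributive qscale qadd.
Proof. by move=> a; elim/quot_ind => x; elim/quot_ind => y; rewrite qaddE !qscaleE qaddE scalerDr. Qed.
Lemma qscaleDl v : {morph qscale^~ v: a b / a + b}.
Proof. by elim/quot_ind: v => x a b; rewrite !qscaleE scalerDl; symmetry; exact: qaddE. Qed.
HB.instance Definition _ := GRing.Zmodule_isLmodule.Build R quot qscaleA qscale1 qscaleDr qscaleDl.

Lemma qpiD x y : qpi (x + y) = qpi x + qpi y. Proof. by rewrite -qaddE. Qed.
Lemma qpiZ r x : qpi (r *: x) = r *: qpi x. Proof. by rewrite -qscaleE. Qed.
Lemma qpi0 x : qpi x = 0 <-> U x.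
Proof. rewrite -[0]/qzero qpi_eqP subr0; done. Qed.
End Quot.



Arguments quot_of {R M U} HU.
Definition qpiL (R : nzRingType) (M : lmodType R) (U : M -> Prop) (HU : submod U) :
  {linear M -> quot_of HU} := mkLin (qpiD HU) (qpiZ HU).
Lemma qpiB (R : nzRingType) (M : lmodType R) (U : M -> Prop) (HU : submod U) x y :
  qpi HU (x - y) = qpi HU x - qpi HU y.
Proof. exact: (linearB (qpiL HU)). Qed.

Section Basics.
Variable R : nzRingType.

Lemma sub0 (M : lmodType R) (U : M -> Prop) : submod U -> U 0. Proof. by case. Qed.
Lemma subD (M : lmodType R) (U : M -> Prop) : submod U -> forall x y, U x -> U y -> U (x + y).
Proof. by case. Qed.
Lemma subZ (M : lmodType R) (U : M -> Prop) : submod U -> forall r x, U x -> U (r *: x).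
Proof. by case. Qed.
Lemma subN (M : lmodType R) (U : M -> Prop) : submod U -> forall x, U x -> U (- x).
Proof. by move=> h x hx; rewrite -scaleN1r; apply: subZ. Qed.
Lemma subB (M : lmodType R) (U : M -> Prop) : submod U -> forall x y, U x -> U y -> U (x - y).
Proof. by move=> h x y hx hy; apply: subD => //; apply: subN. Qed.
Lemma sub_sum (M : lmodType R) (U : M -> Prop) : submod U ->
  forall n (F : 'I_n -> M), (forall i, U (F i)) -> U (\sum_(i < n) F i).
Proof.
move=> h n F hF; apply: (big_ind U); [exact: sub0 | exact: subD | move=> i _; exact: hF].
Qed.
Lemma sub_sumn (M : lmodType R) (U : M -> Prop) : submod U ->
  forall n (F : nat -> M), (forall i, (i < n)%N -> U (F i)) -> U (\sum_(i < n) F i).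
Proof. by move=> h n F hF; apply: sub_sum => // i; apply: hF. Qed.

Lemma ker_submod (A B : lmodType R) (f : {linear A -> B}) : submod (fun x => f x = 0).
Proof.
split; first exact: linear0.
- by move=> x y hx hy; rewrite linearD hx hy addr0.
- by move=> r x hx; rewrite linearZ_LR hx scaler0.
Qed.

Lemma submodT (M : lmodType R) : submod (fun _ : M => True). Proof. by []. Qed.
Lemma submod0 (M : lmodType R) : submod (fun x : M => x = 0).
Proof. split => //= [x y -> ->|r x ->]; [exact: addr0 | exact: scaler0]. Qed.

Lemma cyc_submod (M : lmodType R) (y : M) : submod (fun x => exists r : R, x = r *: y).
Proof.
split; first by exists 0; rewrite scale0r.
- by move=> x z [a ->] [b ->]; exists (a + b); rewrite scalerDl.
- by move=> r x [a ->]; exists (r * a); rewrite scalerA.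
Qed.

Lemma simple_gen (Y : lmodType R) : simple_mod Y -> forall y : Y, y != 0 ->
  forall z : Y, exists r : R, z = r *: y.
Proof.
move=> [_ hs] y hy z.
case: (hs _ (cyc_submod y)) => [h|h]; last exact: h.
by case/eqP: hy; apply: h; exists 1; rewrite scale1r.
Qed.

Lemma simple_fg (Y : lmodType R) : simple_mod Y -> fg Y.
Proof.
move=> hY; have [y hy] := hY.1; exists [:: y] => z.
have [r ->] := simple_gen hY hy z.
by exists (fun _ => r); rewrite big_ord1.
Qed.

Lemma ex_minP (P : nat -> Prop) : (exists n, P n) -> exists n, P n /\ forall k, (k < n)%N -> ~ P k.
Proof.
move=> [n hn]; elim: n {-2}n (leqnn n) hn => [|N IH] n.
  rewrite leqn0 => /eqP -> h0; exists 0%N; split => //.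
move=> hn Pn; case: (classic (exists k, (k < n)%N /\ P k)) => [[k [hk Pk]]|h].
  by apply: (IH k) => //; rewrite -ltnS; apply: leq_trans hk hn.
exists n; split => // k hk Pk; apply: h; exists k; split => //.
Qed.

Lemma mod_iso_sym (A B : lmodType R) : mod_iso A B -> mod_iso B A.
Proof.
move=> [f [g fK gK]].
have gD : forall x y, g (x + y) = g x + g y.
  by move=> x y; apply: (can_inj fK); rewrite linearD !gK.
have gZ : forall (r : R) x, g (r *: x) = r *: g x.
  by move=> r x; apply: (can_inj fK); rewrite linearZ !gK.
by exists (mkLin gD gZ); exists f.
Qed.

Lemma schur (A B : lmodType R) (f : {linear A -> B}) :
  simple_mod A -> simple_mod B -> (exists a, f a != 0) -> mod_iso A B.
Proof.
move=> hA hB [a fa].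
have inj : injective f.
  move=> x y e; apply/eqP; rewrite -subr_eq0; apply/eqP.
  case: (hA.2 _ (ker_submod f)) => [h|h]; first by apply: h; rewrite linearB e subrr.
  by have /= e' := h a; rewrite e' eqxx in fa.
have sur : forall b, exists x, f x = b.
  move=> b; have [r ->] := simple_gen hB fa b; exists (r *: a); exact: linearZ.
pose g b := epsilon (inhabits (0 : A)) (fun x => f x = b).
have gK : cancel g f by move=> b; apply: (epsilon_spec (inhabits (0:A)) (fun x => f x = b)).
exists f; exists g => // x; apply: inj; exact: gK.
Qed.

Variable S : lmodType R -> Prop.

Lemma simple_filtered (Y : lmodType R) : S Y -> simple_mod Y -> filtered S Y.
Proof.
move=> SY hY; exists 1%N, (fun i (x : Y) => if i is 0%N then x = 0 else True); split.
- by case=> [|i] //; exact: submod0.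
- by [].
- by [].
- by case.
- case=> // _; exists Y => //; exists id; split => //.
  by move=> z; exists z.
Qed.

Lemma simple_XS (Y : lmodType R) : S Y -> simple_mod Y -> XS S Y.
Proof. by move=> SY hY; split; [exact: simple_fg | exact: simple_filtered]. Qed.
End Basics.

Section Filt.
Variable R : nzRingType.
Variable S : lmodType R -> Prop.

Lemma filt_quot (A X : lmodType R) (f : {linear A -> X}) :
  filtered S X -> (exists a, f a != 0) ->
  exists2 Y, S Y & exists h : {linear A -> Y}, exists a, h a != 0.
Proof.
move=> [m [C [subC C0 Cm Cinc Cfac]]] [a0 fa0].
have [j [Pj jmin]] := ex_minP (ex_intro (fun j => forall a, C j (f a)) m (fun a => Cm _)).
case: j Pj jmin => [|i] Pj jmin.
  by move: fa0; have /C0 -> := Pj a0; rewrite eqxx.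
have im : (i < m)%N.
  rewrite ltnNge; apply/negP => hm; apply: (jmin m _ (fun a => Cm _)).
  by rewrite ltnS.
have [a1 ha1] : exists a, ~ C i (f a).
  apply: NNPP => h; apply: (jmin i (ltnSn i)) => a; apply: NNPP => h'; apply: h; by exists a.
have [Y SY [phi [phD phZ phS phK]]] := Cfac i im.
have hD : forall x y, phi (f (x + y)) = phi (f x) + phi (f y).
  by move=> x y; rewrite linearD phD.
have hZ : forall (r : R) x, phi (f (r *: x)) = r *: phi (f x).
  by move=> r x; rewrite linearZ_LR phZ.
exists Y => //; exists (mkLin hD hZ); exists a1; rewrite mkLinE.
apply/negP => /eqP e; apply: ha1; exact/(phK _ (Pj a1)).
Qed.

Lemma filt_sub (B X : lmodType R) (f : {linear X -> B}) :
  filtered S X -> (exists a, f a != 0) ->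
  exists2 Y, S Y & exists g : {linear Y -> B}, exists y, g y != 0.
Proof.
move=> [m [C [subC C0 Cm Cinc Cfac]]] [a0 fa0].
have [j [[a [Cja fa]] jmin]] :=
  ex_minP (ex_intro (fun j => exists a, C j a /\ f a != 0) m (ex_intro _ a0 (conj (Cm a0) fa0))).
case: j Cja jmin => [|i] Cja jmin.
  by move: fa; have /C0 -> := Cja; rewrite linear0 eqxx.
have im : (i < m)%N.
  rewrite ltnNge; apply/negP => hm; apply: (jmin m _ (ex_intro _ a0 (conj (Cm a0) fa0))).
  by rewrite ltnS.
have vanish : forall x, C i x -> f x = 0.
  move=> x hx; apply/eqP; apply: NNPP => h; apply: (jmin i (ltnSn i)); exists x; split => //.
  exact/negP.
have [Y SY [phi [phD phZ phS phK]]] := Cfac i im.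
have wd : forall x x', C i.+1 x -> C i.+1 x' -> phi x = phi x' -> f x = f x'.
  move=> x x' hx hx' e; apply/eqP; rewrite -subr_eq0 -linearB; apply/eqP; apply: vanish.
  apply/(phK _ (subB (subC _) hx hx')).
  have := phD _ _ hx' (subB (subC _) hx hx'); rewrite addrC subrK => h.
  by apply: (addrI (phi x')); rewrite addr0 -h e.
pose pre y := epsilon (inhabits (0 : X)) (fun x => C i.+1 x /\ phi x = y).
have preP : forall y, C i.+1 (pre y) /\ phi (pre y) = y.
  move=> y; apply: (epsilon_spec (inhabits (0:X)) (fun x => C i.+1 x /\ phi x = y)).
  by have [x hx hxy] := phS y; exists x.
have gD : forall y y', f (pre (y + y')) = f (pre y) + f (pre y').
  move=> y y'; rewrite -linearD; apply: wd; first exact: (preP _).1.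
    by apply: subD => //; [exact: (preP _).1 | exact: (preP _).1].
  rewrite phD; [|exact: (preP _).1|exact: (preP _).1].
  by rewrite (preP (y + y')).2 (preP y).2 (preP y').2.
have gZ : forall (r : R) y, f (pre (r *: y)) = r *: f (pre y).
  move=> r y; rewrite -linearZ_LR; apply: wd; first exact: (preP _).1.
    by apply: subZ => //; exact: (preP _).1.
  rewrite phZ; last exact: (preP _).1.
  by rewrite (preP (r *: y)).2 (preP y).2.
exists Y => //; exists (mkLin gD gZ); exists (phi a); rewrite mkLinE.
by rewrite (@wd (pre (phi a)) a (preP _).1 Cja (preP _).2).
Qed.

Hypothesis Ssimple : forall X, S X -> simple_mod X.

Lemma TS_char (M : lmodType R) :
  TS S M <-> forall Y, S Y -> forall (h : {linear M -> Y}) m, h m = 0.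
Proof.
split => [hT Y SY h m|hT X [_ fX] f m]; first exact: (hT Y (simple_XS SY (Ssimple SY))).
apply/eqP; apply: NNPP => /negP hm.
have [Y SY [h [a ha]]] := filt_quot fX (ex_intro _ m hm).
by move/negP: ha; apply; apply/eqP; apply: hT.
Qed.

Lemma FS_char (M : lmodType R) :
  FS S M <-> forall Y, S Y -> forall (h : {linear Y -> M}) m, h m = 0.
Proof.
split => [hT Y SY h m|hT X [_ fX] f m]; first exact: (hT Y (simple_XS SY (Ssimple SY))).
apply/eqP; apply: NNPP => /negP hm.
have [Y SY [h [a ha]]] := filt_sub fX (ex_intro _ m hm).
by move/negP: ha; apply; apply/eqP; apply: hT.
Qed.
End Filt.

Section DCC.
Variable R : nzRingType.

Definition dcc (M : lmodType R) : Prop :=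
  forall L : nat -> M -> Prop,
    (forall n, submod (L n)) ->
    (forall n x, L n.+1 x -> L n x) ->
    exists N, forall n, (N <= n)%N -> forall x, L n x <-> L N x.

Lemma chain_le (M : lmodType R) (L : nat -> M -> Prop) :
  (forall n x, L n.+1 x -> L n x) -> forall m n, (m <= n)%N -> forall x, L n x -> L m x.
Proof.
move=> hL m n /subnK <-; elim: (n - m)%N => [|k IH] x //=.
by rewrite addSn => /hL; apply: IH.
Qed.

Fixpoint spanL (M : lmodType R) (s : seq M) (x : M) : Prop :=
  match s with
  | [::] => x = 0
  | a :: s' => exists (r : R) y, spanL s' y /\ x = r *: a + y
  end.

Lemma spanL_submod (M : lmodType R) (s : seq M) : submod (spanL s).
Proof.
elim: s => [|a s IH] /=; first exact: submod0.
split.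
- by exists 0, 0; split; [exact: sub0 | rewrite scale0r addr0].
- move=> x y [r [x' [hx ->]]] [r' [y' [hy ->]]]; exists (r + r'), (x' + y'); split.
    exact: subD.
  by rewrite scalerDl addrACA.
- move=> c x [r [x' [hx ->]]]; exists (c * r), (c *: x'); split; first exact: subZ.
  by rewrite scalerDr scalerA.
Qed.

Lemma spanL_sum (M : lmodType R) (s : seq M) (c : nat -> R) :
  spanL s (\sum_(i < size s) c i *: s`_i).
Proof.
elim: s c => [|a s IH] c /=; first by rewrite big_ord0.
rewrite big_ord_recl /=; exists (c 0%N), (\sum_(i < size s) c i.+1 *: s`_i); split.
  exact: (IH (fun i => c i.+1)).
by [].
Qed.

Lemma fg_spanL (M : lmodType R) : fg M -> exists s : seq M, forall m, spanL s m.
Proof.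
move=> [s hs]; exists s => m; have [c ->] := hs m.
have := spanL_sum s (fun i => if (i < size s)%N =P true is ReflectT h then c (Ordinal h) else 0).
congr spanL; apply: eq_bigr => i _; congr (_ *: _).
case: eqP => h; last by rewrite ltn_ord in h.
by congr c; apply: val_inj.
Qed.

Hypothesis Rart : left_artinian R.

Lemma dcc_span (M : lmodType R) (s : seq M) :
  forall L : nat -> M -> Prop,
    (forall n, submod (L n)) ->
    (forall n x, L n.+1 x -> L n x) ->
    (forall n x, L n x -> spanL s x) ->
    exists N, forall n, (N <= n)%N -> forall x, L n x <-> L N x.
Proof.
elim: s => [|a s IH] L subL decL inL.
  exists 0%N => n _ x; split; first exact: (chain_le decL (leq0n n)).
  by move=> h; have /= -> := inL 0%N x h; exact: sub0.
pose B n x := L n x /\ spanL s x.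
have subB' : forall n, submod (B n).
  move=> n; split; first by split; [exact: sub0 | exact: sub0 (spanL_submod s)].
  - by move=> x y [hx hx'] [hy hy']; split; apply: subD => //; exact: spanL_submod.
  - by move=> r x [hx hx']; split; apply: subZ => //; exact: spanL_submod.
have decB : forall n x, B n.+1 x -> B n x by move=> n x [h1 h2]; split => //; exact: decL.
have [N1 hN1] := IH B subB' decB (fun n x h => h.2).
pose I n (r : R^o) := exists y, spanL s y /\ L n (r *: a + y).
have subI : forall n, submod (I n).
  move=> n; split.
  - by exists 0; split; [exact: sub0 (spanL_submod s) | rewrite scale0r addr0; exact: sub0 (subL n)].
  - move=> r r' [y [hy h]] [y' [hy' h']]; exists (y + y'); split; first exact (subD (spanL_submod s) hy hy').
    by rewrite scalerDl addrACA; exact (subD (subL n) h h').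
  - move=> c r [y [hy h]]; exists (c *: y); split; first exact (subZ (spanL_submod s) _ hy).
    by have := subZ (subL n) c h; rewrite scalerDr scalerA.
have decI : forall n x, I n.+1 x -> I n x by move=> n x [y [hy h]]; exists y; split => //; exact: decL.
have [N2 hN2] := Rart subI decI.
exists (maxn N1 N2) => n hn x; split; first exact: (chain_le decL hn).
move=> hx; have := inL _ _ hx; move=> [r [y [hy ex]]].
have hIN : I (maxn N1 N2) r by exists y; rewrite -ex.
have [y' [hy' hL']] : I n r.
  apply/(hN2 n (leq_trans (leq_maxr _ _) hn)).
  by apply/(hN2 (maxn N1 N2) (leq_maxr _ _)).
have e : x = (r *: a + y') + (y - y') by rewrite ex -addrA [y' + _]addrC subrK.
rewrite e; apply: subD => //.
have hB : B (maxn N1 N2) (y - y').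
  split; last by apply: subB => //; exact: spanL_submod.
  rewrite ex in hx; have := subB (subL _) hx (chain_le decL hn hL').
  by rewrite opprD addrACA subrr add0r addrC.
have := (hN1 n (leq_trans (leq_maxl _ _) hn) (y - y')).2.
move=> /(_ ((hN1 (maxn N1 N2) (leq_maxl _ _) _).1 hB)); by case.
Qed.

Lemma dcc_fg (M : lmodType R) : fg M -> dcc M.
Proof.
move=> /fg_spanL [s hs] L subL decL; exact: (dcc_span subL decL (fun n x _ => hs x)).
Qed.

Lemma dcc_R : dcc R^o.
Proof. exact: Rart. Qed.
End DCC.

Lemma dcc_min (R : nzRingType) (M : lmodType R) (P : (M -> Prop) -> Prop) :
  dcc M -> (forall V, P V -> submod V) -> (exists V, P V) ->
  exists V, P V /\ forall W, P W -> (forall x, W x -> V x) -> forall x, V x -> W x.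
Proof.
move=> hd subP [V0 PV0]; apply: NNPP => hno.
have step : forall V, exists W, P V -> P W /\ (forall x, W x -> V x) /\ exists x, V x /\ ~ W x.
  move=> V; case: (classic (P V)) => PV; last by exists V.
  apply: NNPP => hW; apply: hno; exists V; split => // W PW WV x Vx.
  apply: NNPP => nWx; apply: hW; exists W => _; split => //; split => //; by exists x.
pose next V := epsilon (inhabits (fun _ : M => False))
  (fun W => P V -> P W /\ (forall x, W x -> V x) /\ exists x, V x /\ ~ W x).
have nextP : forall V, P V -> P (next V) /\ (forall x, next V x -> V x) /\ exists x, V x /\ ~ next V x.
  move=> V PV; apply: (epsilon_spec (inhabits (fun _ : M => False))
    (fun W => P V -> P W /\ (forall x, W x -> V x) /\ exists x, V x /\ ~ W x)) => //.
pose L n := iter n next V0.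
have PL : forall n, P (L n) by elim=> [|n IH] //=; exact: (nextP _ IH).1.
have [N hN] := hd L (fun n => subP _ (PL n)) (fun n x => (nextP _ (PL n)).2.1 x).
have [x [hx nx]] := (nextP _ (PL N)).2.2.
by apply: nx; apply/(hN N.+1 (leqnSn N)).
Qed.

Lemma factor (R : nzRingType) (P M Y : lmodType R) (pi : {linear P -> M}) (h : {linear P -> Y}) :
  (forall m, exists p, pi p = m) -> (forall k, pi k = 0 -> h k = 0) ->
  exists h' : {linear M -> Y}, forall p, h' (pi p) = h p.
Proof.
move=> sur hk.
pose pre m := epsilon (inhabits (0 : P)) (fun p => pi p = m).
have preP : forall m, pi (pre m) = m.
  by move=> m; apply: (epsilon_spec (inhabits (0 : P)) (fun p => pi p = m)).
have wd : forall p p', pi p = pi p' -> h p = h p'.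
  move=> p p' e; apply/eqP; rewrite -subr_eq0 -linearB; apply/eqP; apply: hk.
  by rewrite linearB e subrr.
have hD : forall x y, h (pre (x + y)) = h (pre x) + h (pre y).
  by move=> x y; rewrite -linearD; apply: wd; rewrite linearD !preP.
have hZ : forall (r : R) x, h (pre (r *: x)) = r *: h (pre x).
  by move=> r x; rewrite -linearZ_LR; apply: wd; rewrite linearZ_LR !preP.
by exists (mkLin hD hZ) => p; rewrite mkLinE; apply: wd; rewrite preP.
Qed.

Section PartC.
Variable R : nzRingType.
Variable S : lmodType R -> Prop.
Hypothesis Ssimple : forall X, S X -> simple_mod X.

Lemma part_c (M P : lmodType R) (pi : {linear P -> M}) :
  fg M -> TS S M -> projective_cover pi -> TS S P.
Proof.
move=> _ TSM [_ _ sur sup]; apply/(TS_char Ssimple) => Y SY h m.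
apply/eqP; apply: NNPP => /negP hm.
have [k0 [pk0 hk0]] : exists k, pi k = 0 /\ h k != 0.
  apply: NNPP => hno.
  have hk : forall k, pi k = 0 -> h k = 0.
    move=> k pk; apply/eqP; apply: NNPP => /negP hk; apply: hno; exists k; split => //; exact/negP.
  have [h' hh'] := factor sur hk.
  move/negP: hm; apply; rewrite -hh'; apply/eqP.
  exact: (proj1 (TS_char Ssimple M) TSM Y SY h').
have all0 : forall p, h p = 0.
  apply: (sup _ (ker_submod h)) => p.
  have [r hr] := simple_gen (Ssimple SY) hk0 (h p).
  exists (p - r *: k0), (r *: k0); split.
  - by rewrite linearB linearZ_LR -hr subrr.
  - by rewrite linearZ_LR pk0 scaler0.
  - by rewrite subrK.
by move/negP: hm; apply; rewrite all0.
Qed.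
End PartC.

Section Comp.
Variable R : nzRingType.
Lemma compD (A B C : lmodType R) (g : {linear B -> C}) (f : {linear A -> B}) x y :
  g (f (x + y)) = g (f x) + g (f y).
Proof. by rewrite !linearD. Qed.
Lemma compZ (A B C : lmodType R) (g : {linear B -> C}) (f : {linear A -> B}) (r : R) x :
  g (f (r *: x)) = r *: g (f x).
Proof. by rewrite !linearZ_LR. Qed.
Definition compL (A B C : lmodType R) (g : {linear B -> C}) (f : {linear A -> B}) : {linear A -> C} :=
  mkLin (compD g f) (compZ g f).
Lemma compLE (A B C : lmodType R) (g : {linear B -> C}) (f : {linear A -> B}) x :
  compL g f x = g (f x).
Proof. by []. Qed.

Lemma ker_maximal (M Y : lmodType R) (h : {linear M -> Y}) :
  simple_mod Y -> (exists m, h m != 0) -> maximal_submod (fun x => h x = 0).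
Proof.
move=> hY [m hm]; split; first exact: ker_submod.
  by exists m => e; rewrite e eqxx in hm.
move=> V subV hV.
case: (classic (exists v, V v /\ h v != 0)) => [[v [Vv hv]]|hno]; [right|left] => x.
  have [r hr] := simple_gen hY hv (h x).
  have -> : x = (x - r *: v) + r *: v by rewrite subrK.
  apply: subD => //; last exact: subZ.
  by apply: hV; rewrite linearB linearZ_LR -hr subrr.
split; last exact: hV.
by move=> Vx; apply/eqP; apply: NNPP => /negP hx; apply: hno; exists x.
Qed.
End Comp.

Lemma sum_nonzero (R : nzRingType) (M : lmodType R) n (F : 'I_n -> M) :
  \sum_(i < n) F i != 0 -> exists i, F i != 0.
Proof.
move=> h; apply: NNPP => hno; move/negP: h; apply; apply/eqP; apply: big1 => i _.
by apply/eqP; apply: NNPP => hi; apply: hno; exists i; exact/negP.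
Qed.

Section PartA1.
Variable R : nzRingType.
Variable S : lmodType R -> Prop.
Hypothesis Ssimple : forall X, S X -> simple_mod X.

Lemma part_a_back (M : lmodType R) : top_in_add (Scompl S) M -> TS S M.
Proof.
move=> [N [pi [sur kerpi [n [X [iota [CX _ dec _]]]]]]].
apply/(TS_char Ssimple) => Y SY h m; apply/eqP; apply: NNPP => /negP hm.
have hmax := ker_maximal (Ssimple SY) (ex_intro _ m hm).
have [h' hh'] : exists h' : {linear N -> Y}, forall p, h' (pi p) = h p.
  by apply: (factor sur) => k /kerpi rk; exact: (rk _ hmax).
have [x ex] := dec (pi m) I.
have : \sum_(i < n) h' (iota i (x i)) != 0 by rewrite -linear_sum -ex hh'.
move=> /sum_nonzero [i hi].
have := @schur _ _ _ (compL h' (iota i)) (CX i).1 (Ssimple SY) (ex_intro _ (x i) hi).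
move=> iso; apply: (CX i).2; by exists Y.
Qed.
End PartA1.

Section PartB1.
Variable R : nzRingType.
Variable S : lmodType R -> Prop.
Hypothesis Ssimple : forall X, S X -> simple_mod X.

Lemma image_simple (Y M : lmodType R) (g : {linear Y -> M}) :
  simple_mod Y -> (exists y, g y != 0) -> simple_submod (fun x => exists y, x = g y).
Proof.
move=> hY [y0 hy0]; split.
- split; first by exists 0; rewrite linear0.
  + by move=> _ _ [a ->] [b ->]; exists (a + b); rewrite linearD.
  + by move=> r _ [a ->]; exists (r *: a); rewrite linearZ_LR.
- by exists (g y0) => //; exists y0.
move=> W subW hW.
pose W' y := W (g y).
have subW' : submod W'.
  split; first by rewrite /W' linear0; exact: sub0.
  - by move=> a b ha hb; rewrite /W' linearD; apply: subD.
  - by move=> r a ha; rewrite /W' linearZ_LR; apply: subZ.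
case: (hY.2 _ subW') => h; [left|right] => x.
  move=> Wx; have [y ey] := hW x Wx; rewrite ey in Wx *.
  by rewrite (h y Wx) linear0.
split; first exact: hW.
by move=> [y ->]; apply: h.
Qed.

Lemma part_b_back (M : lmodType R) : soc_in_add (Scompl S) M -> FS S M.
Proof.
move=> [n [X [iota [CX iotaP dec uniq]]]].
apply/(FS_char Ssimple) => Y SY g y0; apply/eqP; apply: NNPP => /negP hy0.
have hsim := image_simple (Ssimple SY) (ex_intro _ y0 hy0).
have socg : forall y, soc (g y).
  move=> y; exists 1%N, (fun _ x => exists y, x = g y), (fun _ => g y); split => //.
  - by move=> i; exists y.
  - by rewrite big_ord1.
pose D y := epsilon (inhabits ((fun i => 0) : forall i, X i))
  (fun x : forall i, X i => g y = \sum_(i < n) iota i (x i)).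
have DP : forall y, g y = \sum_(i < n) iota i (D y i).
  move=> y; apply: (epsilon_spec (inhabits ((fun i => 0) : forall i, X i))
    (fun x : forall i, X i => g y = \sum_(i < n) iota i (x i))).
  exact: dec (socg y).
have DD : forall y1 y2 i, D (y1 + y2) i = D y1 i + D y2 i.
  move=> y1 y2; apply: (uniq _ (fun i => D y1 i + D y2 i)).
  rewrite -DP.
  under eq_bigr do rewrite linearD.
  by rewrite big_split /= -!DP linearD.
have DZ : forall (r : R) y i, D (r *: y) i = r *: D y i.
  move=> r y; apply: (uniq _ (fun i => r *: D y i)).
  rewrite -DP.
  under eq_bigr do rewrite linearZ_LR.
  by rewrite -scaler_sumr -DP linearZ_LR.
have : \sum_(i < n) iota i (D y0 i) != 0 by rewrite -DP.
move=> /sum_nonzero [i hi].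
have hi' : D y0 i != 0 by apply: contraNneq hi => ->; rewrite linear0.
have := @schur _ _ _ (mkLin (fun a b => DD a b i) (fun r a => DZ r a i)) (Ssimple SY) (CX i).1
  (ex_intro _ y0 hi').
move=> /mod_iso_sym iso; apply: (CX i).2; by exists Y.
Qed.
End PartB1.

Lemma max_submod (R : nzRingType) (M : lmodType R) (U : M -> Prop) : maximal_submod U -> submod U.
Proof. by case. Qed.

Lemma rad_submod (R : nzRingType) (M : lmodType R) : submod (@Defs.rad R M).
Proof.
split.
- by move=> U hU; exact: sub0 (max_submod hU).
- by move=> x y hx hy U hU; exact (subD (max_submod hU) (hx U hU) (hy U hU)).
- by move=> r x hx U hU; exact (subZ (max_submod hU) _ (hx U hU)).
Qed.

Lemma sum_others (R : nzRingType) (M : lmodType R) k (V : M -> Prop) (s : 'I_k -> M) (i : 'I_k) :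
  submod V -> (forall j, j != i -> V (s j)) -> V (\sum_(j < k) s j - s i).
Proof.
move=> hV hs; rewrite (bigD1 i) //= addrAC subrr add0r.
apply: (big_ind V); [exact: sub0 | exact: subD | by move=> j /hs].
Qed.

Section PartA2.
Variable R : nzRingType.
Variable S : lmodType R -> Prop.
Hypothesis Ssimple : forall X, S X -> simple_mod X.
Hypothesis Rart : left_artinian R.

Definition inter (M : lmodType R) (U : nat -> M -> Prop) k (x : M) := forall i, (i < k)%N -> U i x.

Lemma inter_submod (M : lmodType R) (U : nat -> M -> Prop) k :
  (forall i, (i < k)%N -> submod (U i)) -> submod (inter U k).
Proof.
move=> h; split.
- by move=> i hi; exact: sub0 (h i hi).
- by move=> x y hx hy i hi; exact (subD (h i hi) (hx i hi) (hy i hi)).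
- by move=> r x hx i hi; exact (subZ (h i hi) _ (hx i hi)).
Qed.

Lemma rad_finite (M : lmodType R) : fg M ->
  exists k (U : nat -> M -> Prop), (forall i, (i < k)%N -> maximal_submod (U i)) /\
    forall x, inter U k x -> Defs.rad x.
Proof.
move=> fgM; have hd := dcc_fg Rart fgM.
pose P V := exists k (U : nat -> M -> Prop), (forall i, (i < k)%N -> maximal_submod (U i)) /\
   forall x, V x <-> inter U k x.
have subP : forall V, P V -> submod V.
  move=> V [k [U [hU e]]].
  have h := inter_submod (fun i hi => max_submod (hU i hi)).
  split; first by apply/e; exact: sub0 h.
  - by move=> x y /e hx /e hy; apply/e; exact (subD h hx hy).
  - by move=> r x /e hx; apply/e; exact (subZ h _ hx).
have [V [[k [U [hU e]]] Vmin]] := dcc_min hd subP (ex_intro _ (fun _ => True)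
   (ex_intro _ 0%N (ex_intro _ (fun _ _ => True) (conj (fun i (hi : (i < 0)%N) => False_ind _ (notF hi))
     (fun x => conj (fun _ i (hi : (i < 0)%N) => False_ind _ (notF hi)) (fun _ => I)))))).
exists k, U; split => // x hx W hW.
pose U' i := if (i < k)%N then U i else W.
have PVW : P (fun x => V x /\ W x).
  exists k.+1, U'; split.
    move=> i hi; rewrite /U'; case: ltnP => hik; [exact: hU | exact: hW].
  move=> y; split.
    move=> [/e hy hWy] i hi; rewrite /U'; case: ltnP => hik //; exact: hy.
  move=> hy; split; last by have := hy k (ltnSn k); rewrite /U' ltnn.
  apply/e => i hi; have := hy i (ltnW hi); by rewrite /U' hi.
have := Vmin _ PVW (fun y h => h.1) x.
by move=> /(_ (proj2 (e x) hx)) [].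
Qed.

Lemma rad_irred (M : lmodType R) : fg M ->
  exists k (U : nat -> M -> Prop), [/\ (forall i, (i < k)%N -> maximal_submod (U i)),
    (forall x, inter U k x <-> Defs.rad x) &
    forall j, (j < k)%N -> exists x, (forall i, (i < k)%N -> i != j -> U i x) /\ ~ U j x].
Proof.
move=> fgM.
have [k [[U [hU hr]] kmin]] := ex_minP (rad_finite fgM).
exists k, U; split => //.
  by move=> x; split; [exact: hr | move=> rx i hi; exact: rx _ (hU i hi)].
move=> j hj.
pose U' i := if (i < j)%N then U i else U i.+1.
have hk : (k.-1 < k)%N by rewrite prednK // (leq_ltn_trans (leq0n j) hj).
have nQ := kmin _ hk.
have hU' : forall i, (i < k.-1)%N -> maximal_submod (U' i).
  move=> i hi; rewrite /U'; case: ltnP => _; apply: hU.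
    by apply: leq_trans hi (leq_pred k).
  by rewrite -(prednK (leq_ltn_trans (leq0n j) hj)) ltnS.
have [x [hx nrx]] : exists x, inter U' k.-1 x /\ ~ Defs.rad x.
  apply: NNPP => hno; apply: nQ; exists U'; split => // x hx; apply: NNPP => nr; apply: hno.
  by exists x; split.
have hk1 : k = k.-1.+1 by rewrite prednK // (leq_ltn_trans (leq0n j) hj).
have others : forall i, (i < k)%N -> i != j -> U i x.
  move=> i hi hij; case: (ltnP i j) => hij'.
    have hik : (i < k.-1)%N by apply: leq_trans hij' _; rewrite -ltnS -hk1.
    by have := hx i hik; rewrite /U' hij'.
  have hji : (j < i)%N by rewrite ltn_neqAle eq_sym hij hij'.
  move: hji hi; case: i {hij hij'} => // i hji hi.
  have hik : (i < k.-1)%N by rewrite -ltnS -hk1.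
  by have := hx i hik; rewrite /U' ltnNge -ltnS hji.
exists x; split => // Ujx; apply: nrx; apply: hr => i hi.
case: (eqVneq i j) => [->|hij] //; exact: others.
Qed.

Lemma congT (M : lmodType R) (U : M -> Prop) : submod U -> forall a b c, U (a - b) -> U (b - c) -> U (a - c).
Proof. by move=> h a b c h1 h2; have := subD h h1 h2; rewrite addrA subrK. Qed.
Lemma congD (M : lmodType R) (U : M -> Prop) : submod U -> forall a b c d, U (a - b) -> U (c - d) -> U ((a + c) - (b + d)).
Proof. by move=> h a b c d h1 h2; have := subD h h1 h2; rewrite opprD addrACA. Qed.
Lemma congZ (M : lmodType R) (U : M -> Prop) : submod U -> forall (r : R) a b, U (a - b) -> U (r *: a - r *: b).
Proof. by move=> h r a b h1; have := subZ h r h1; rewrite scalerBr. Qed.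
Lemma cong_val (M : lmodType R) (U : M -> Prop) (HU : submod U) (x : M) : U (val (qpi HU x) - x).
Proof. exact: Uval. Qed.

Lemma part_a_fwd (M : lmodType R) : fg M -> TS S M -> top_in_add (Scompl S) M.
Proof.
move=> fgM TSM.
have [k [U [hU hrad hirr]]] := rad_irred fgM.
pose HR := rad_submod M.
pose HU (j : 'I_k) := max_submod (hU j (ltn_ord j)).
pose W j x := forall i, (i < k)%N -> i != j -> U i x.
have subW : forall j, submod (W j).
  move=> j; split.
  - by move=> i hi _; exact: sub0 (max_submod (hU i hi)).
  - by move=> x y hx hy i hi hij; exact (subD (max_submod (hU i hi)) (hx i hi hij) (hy i hi hij)).
  - by move=> r x hx i hi hij; exact (subZ (max_submod (hU i hi)) _ (hx i hi hij)).
have cover : forall j, (j < k)%N -> forall m, exists w, W j w /\ U j (m - w).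
  move=> j hj m; have [w0 [hw0 nw0]] := hirr j hj.
  pose V x := exists u w, [/\ U j u, W j w & x = u + w].
  have subV : submod V.
    have sj := max_submod (hU j hj).
    split.
    - by exists 0, 0; split; [exact: sub0 sj | exact: sub0 (subW j) | rewrite addr0].
    - move=> x y [u [w [hu hw ->]]] [u' [w' [hu' hw' ->]]]; exists (u + u'), (w + w'); split.
      + exact (subD sj hu hu').
      + exact (subD (subW j) hw hw').
      + by rewrite addrACA.
    - move=> r x [u [w [hu hw ->]]]; exists (r *: u), (r *: w); split.
      + exact (subZ sj _ hu).
      + exact (subZ (subW j) _ hw).
      + by rewrite scalerDr.
  have UV : forall x, U j x -> V x.
    by move=> x hx; exists x, 0; split => //; [exact: sub0 (subW j) | rewrite addr0].
  have [_ _ hmax] := hU j hj.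
  case: (hmax V subV UV) => [e|hall].
    exfalso; apply: nw0; apply/e; exists 0, w0; split => //; [exact: sub0 (max_submod (hU j hj)) | by rewrite add0r].
  have [u [w [hu hw em]]] := hall m; exists w; split => //.
  by rewrite em addrK.
pose sel (j : nat) m := epsilon (inhabits (0 : M)) (fun w => W j w /\ U j (m - w)).
have selP : forall j, (j < k)%N -> forall m, W j (sel j m) /\ U j (m - sel j m).
  by move=> j hj m; apply: (epsilon_spec (inhabits (0:M)) (fun w => W j w /\ U j (m - w))); apply: cover.
have selE : forall j, (j < k)%N -> forall x y, W j y -> U j (x - y) -> qpi HR (sel j x) = qpi HR y.
  move=> j hj x y hy hxy; apply: qpi_eq; apply/hrad => i hi.
  case: (eqVneq i j) => [->|hij].
    apply: (congT (max_submod (hU j hj)) _ hxy).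
    have := subN (max_submod (hU j hj)) (selP j hj x).2; by rewrite opprB.
  exact (subB (max_submod (hU i hi)) ((selP j hj x).1 i hi hij) (hy i hi hij)).
pose iotaf (j : 'I_k) (q : quot_of (HU j)) := qpi HR (sel j (val q)).
have iotaD : forall j x y, iotaf j (x + y) = iotaf j x + iotaf j y.
  move=> j x y; rewrite /iotaf -qpiD; apply: selE => //.
    exact (subD (subW j) (selP j (ltn_ord j) _).1 (selP j (ltn_ord j) _).1).
  apply: (congT (max_submod (hU j (ltn_ord j)))) (congD (max_submod (hU j (ltn_ord j)))
     (selP j (ltn_ord j) (val x)).2 (selP j (ltn_ord j) (val y)).2).
  apply/(qpi_eqP (HU j)); by rewrite qpiD !qpi_val.
have iotaZ : forall j (r : R) x, iotaf j (r *: x) = r *: iotaf j x.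
  move=> j r x; rewrite /iotaf -qpiZ; apply: selE => //.
    exact (subZ (subW j) _ (selP j (ltn_ord j) _).1).
  apply: (congT (max_submod (hU j (ltn_ord j)))) (congZ (max_submod (hU j (ltn_ord j))) r
     (selP j (ltn_ord j) (val x)).2).
  apply/(qpi_eqP (HU j)); by rewrite qpiZ !qpi_val.
pose iota (j : 'I_k) : {linear quot_of (HU j) -> quot_of HR} := mkLin (iotaD j) (iotaZ j).
exists (quot_of HR), (qpiL HR); split.
- by elim/quot_ind => x; exists x.
- by move=> x; rewrite /= qpi0.
exists k, (fun j => quot_of (HU j)), iota; split => //.
- move=> j; have [w0 [hw0 nw0]] := hirr j (ltn_ord j).
  have hsim : simple_mod (quot_of (HU j)).
    split; first by exists (qpi (HU j) w0); apply/negP => /eqP /qpi0.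
    move=> V subV.
    pose V' x := V (qpi (HU j) x).
    have subV' : submod V'.
      split; first by rewrite /V' -[qpi _ 0]/(qpiL _ 0) linear0; exact: sub0 subV.
      - by move=> x y hx hy; rewrite /V' qpiD; exact (subD subV hx hy).
      - by move=> r x hx; rewrite /V' qpiZ; exact (subZ subV _ hx).
    have UV' : forall x, U j x -> V' x.
      by move=> x /(qpi0 (HU j)) e; rewrite /V' e; exact: sub0 subV.
    have [_ _ hmax] := hU j (ltn_ord j).
    case: (hmax V' subV' UV') => e; [left|right]; elim/quot_ind => x.
      by move=> hx; apply/qpi0; apply/e.
    exact: e.
  split => //; move=> [Y SY [f [g fK gK]]].
  have := proj1 (TS_char Ssimple M) TSM Y SY (compL f (qpiL (HU j))) w0.
  rewrite compLE => e; apply: nw0; apply/(qpi0 (HU j)).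
  by rewrite -[qpi _ _]fK /= e -[0 in LHS](linear0 f) fK.
- move=> y _; elim/quot_ind: y => m.
  exists (fun j => qpi (HU j) m).
  rewrite /iota; under eq_bigr do rewrite mkLinE /iotaf.
  rewrite -[\sum_(i < k) _](@linear_sum _ _ _ _ (qpiL HR)) /=.
  apply: qpi_eq; apply/hrad => i hi.
  pose i' := Ordinal hi.
  have hUi := max_submod (hU i hi).
  have hoth : forall j : 'I_k, j != i' -> U i (sel j (val (qpi (HU j) m))).
    move=> j hj; have := (selP j (ltn_ord j) (val (qpi (HU j) m))).1 i hi; apply.
    by apply/eqP => e; move/eqP: hj; apply; apply: val_inj; rewrite /= e.
  have h1 : U i (m - sel i (val (qpi (HU i') m))).
    apply: (congT hUi _ (selP i hi (val (qpi (HU i') m))).2).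
    by have := subN hUi (cong_val (HU i') m); rewrite opprB.
  have := subB hUi h1 (sum_others (s:=fun j => sel j (val (qpi (HU j) m))) (i:=i') hUi hoth).
  by rewrite /= opprB addrA subrK.
- move=> x x' e i.
  pose z j := x j - x' j.
  pose s (j : 'I_k) := sel j (val (z j)).
  have hz : qpi HR (\sum_(j < k) s j) = 0.
    rewrite -[qpi HR _]/(qpiL HR _) linear_sum /=.
    have -> : \sum_(j < k) qpiL HR (s j) = \sum_(j < k) iota j (z j).
      by apply: eq_bigr => j _; rewrite mkLinE.
    rewrite /z; under eq_bigr do rewrite linearB.
    by rewrite sumrB e subrr.
  have hUi := max_submod (hU i (ltn_ord i)).
  have h1 : U i (\sum_(j < k) s j) by apply: (proj2 (hrad _) _ i (ltn_ord i)); apply/(qpi0 HR).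
  have hoth : forall j : 'I_k, j != i -> U i (s j).
    move=> j hj; have := (selP j (ltn_ord j) (val (z j))).1 i (ltn_ord i); apply.
    by apply/eqP => e'; move/eqP: hj; apply; apply: val_inj; rewrite /= e'.
  have h2 := subB hUi h1 (sum_others (s:=s) (i:=i) hUi hoth).
  rewrite subKr in h2.
  have h3 := subD hUi (selP i (ltn_ord i) (val (z i))).2 h2.
  rewrite subrK in h3.
  have : z i = 0 by rewrite -(qpi_val (z i)); apply/qpi0.
  by move=> /eqP; rewrite subr_eq0 => /eqP.
Qed.
End PartA2.

Section Fam.
Variable R : nzRingType.
Variable M : lmodType R.

Definition spanF (U : nat -> M -> Prop) n (y : M) :=
  exists x : nat -> M, (forall i, (i < n)%N -> U i (x i)) /\ y = \sum_(i < n) x i.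
Definition indep (U : nat -> M -> Prop) n :=
  forall x : nat -> M, (forall i, (i < n)%N -> U i (x i)) -> \sum_(i < n) x i = 0 ->
    forall i, (i < n)%N -> x i = 0.

Lemma pad_sum n N (z : nat -> M) : (n <= N)%N ->
  \sum_(i < N) (if (i < n)%N then z i else 0) = \sum_(i < n) z i.
Proof. by move=> h; rewrite [RHS](big_ord_widen N z h) [RHS]big_mkcond. Qed.

Lemma spanF_submod U n : (forall i, (i < n)%N -> submod (U i)) -> submod (spanF U n).
Proof.
move=> hU; split.
- by exists (fun _ => 0); split; [move=> i hi; exact: sub0 (hU i hi) | rewrite big1].
- move=> a b [x [hx ->]] [y [hy ->]]; exists (fun i => x i + y i); split.
    by move=> i hi; exact (subD (hU i hi) (hx i hi) (hy i hi)).
  by rewrite big_split.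
- move=> r a [x [hx ->]]; exists (fun i => r *: x i); split.
    by move=> i hi; exact (subZ (hU i hi) _ (hx i hi)).
  by rewrite scaler_sumr.
Qed.

Lemma fam_ext (F G : nat -> M -> Prop) n : (forall i, (i < n)%N -> F i = G i) ->
  (forall y, spanF F n y <-> spanF G n y) /\ (indep F n <-> indep G n).
Proof.
move=> e; split.
  move=> y; split => [[x [hx ->]]|[x [hx ->]]]; exists x; split => // i hi.
    by rewrite -e //; apply: hx.
  by rewrite e //; apply: hx.
split => h x hx; apply: h => i hi; [rewrite e | rewrite -e] => //; exact: hx.
Qed.

Lemma simple_inter (V W : M -> Prop) : simple_submod V -> submod W ->
  (exists2 x, V x & ~ W x) -> forall x, V x -> W x -> x = 0.
Proof.
move=> [subV _ hV] subW [x0 Vx0 nWx0].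
have sub : submod (fun x => V x /\ W x).
  split; first by split; [exact: sub0 | exact: sub0].
  - by move=> a b [h1 h2] [h3 h4]; split; [exact (subD subV h1 h3) | exact (subD subW h2 h4)].
  - by move=> r a [h1 h2]; split; [exact (subZ subV _ h1) | exact (subZ subW _ h2)].
case: (hV _ sub (fun x h => h.1)) => [h|h] x Vx Wx; first exact: h.
by exfalso; apply: nWx0; apply: (proj2 (h x0) Vx0).2.
Qed.

Lemma indep_step (U : nat -> M -> Prop) n :
  (forall i, (i <= n)%N -> submod (U i)) -> simple_submod (U n) ->
  (exists2 x, U n x & ~ spanF U n x) -> indep U n -> indep U n.+1.
Proof.
move=> hU hs hx hind x hxU; rewrite big_ord_recr /= => e.
have hsp : submod (spanF U n) by apply: spanF_submod => i hi; apply: hU; exact: ltnW.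
have xn : x n = 0.
  apply: (simple_inter hs hsp hx); first exact: hxU.
  exists (fun i => - x i); split; first by move=> i hi; exact (subN (hU i (ltnW hi)) (hxU i (ltnW hi))).
  by rewrite sumrN; apply/eqP; rewrite -addr_eq0 addrC e.
rewrite xn addr0 in e.
move=> i; rewrite ltnS leq_eqVlt => /orP [/eqP ->|hi] //.
by apply: hind => // j hj; apply: hxU; exact: ltnW.
Qed.
End Fam.

Section PartB2.
Variable R : nzRingType.
Hypothesis Rart : left_artinian R.

Lemma soc_finite (M : lmodType R) : fg M ->
  exists n (U : nat -> M -> Prop), [/\ (forall i, (i < n)%N -> simple_submod (U i)),
    indep U n & forall V, simple_submod V -> forall x, V x -> spanF U n x].
Proof.
move=> fgM; have hd := dcc_fg Rart fgM.
apply: NNPP => hno.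
have step : forall (F : nat -> M -> Prop) n, exists V,
    ((forall i, (i < n)%N -> simple_submod (F i)) /\ indep F n) ->
    simple_submod V /\ exists2 x, V x & ~ spanF F n x.
  move=> F n; apply: NNPP => hV; apply: hno; exists n, F.
  case: (classic ((forall i, (i < n)%N -> simple_submod (F i)) /\ indep F n)) => [[h1 h2]|h].
    split => // V hsV x Vx; apply: NNPP => nx; apply: hV; exists V => _; split => //; by exists x.
  by exfalso; apply: hV; exists (fun _ => False) => /h.
pose dflt := fun _ : M => False.
pose c (F : nat -> M -> Prop) n := epsilon (inhabits dflt) (fun V =>
    ((forall i, (i < n)%N -> simple_submod (F i)) /\ indep F n) ->
    simple_submod V /\ exists2 x, V x & ~ spanF F n x).
have cP : forall F n, ((forall i, (i < n)%N -> simple_submod (F i)) /\ indep F n) ->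
    simple_submod (c F n) /\ exists2 x, c F n x & ~ spanF F n x.
  by move=> F n; apply: (epsilon_spec (inhabits dflt) (fun V =>
    ((forall i, (i < n)%N -> simple_submod (F i)) /\ indep F n) ->
    simple_submod V /\ exists2 x, V x & ~ spanF F n x)); exact: step.
pose hist := fix hist n := if n is n'.+1 then rcons (hist n') (c (fun i => nth dflt (hist n') i) n') else [::].
pose Us i := nth dflt (hist i.+1) i.
have size_hist : forall n, size (hist n) = n by elim=> [|n IH] //=; rewrite size_rcons IH.
have UsE : forall n, Us n = c (fun i => nth dflt (hist n) i) n.
  by move=> n; rewrite /Us /= nth_rcons size_hist ltnn eqxx.
have histE : forall n i, (i < n)%N -> nth dflt (hist n) i = Us i.
  elim=> [|n IH] i // hi; rewrite [LHS]/= nth_rcons size_hist.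
  rewrite ltnS leq_eqVlt in hi; case/orP: hi => [/eqP ->|hi]; first by rewrite ltnn eqxx UsE.
  by rewrite hi IH.
have inv : forall n, (forall i, (i < n)%N -> simple_submod (Us i)) /\ indep Us n.
  elim=> [|n [IH1 IH2]].
    by split => // x _ _ i.
  have [ext1 ext2] := fam_ext (fun i hi => histE n i hi).
  have := cP (fun i => nth dflt (hist n) i) n.
  have hs0 : forall i, (i < n)%N -> simple_submod (nth dflt (hist n) i).
    by move=> i hi; rewrite histE //; exact: IH1.
  rewrite -UsE => /(_ (conj hs0 (proj2 ext2 IH2))).
  move=> [hs [x hx nx]]; split.
    move=> i; rewrite ltnS leq_eqVlt => /orP [/eqP ->|hi] //; exact: IH1.
  apply: indep_step => //.
  - move=> i; rewrite leq_eqVlt => /orP [/eqP ->|hi]; [by case: hs | by case: (IH1 i hi)].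
  - by exists x => // /(ext1 x).
have hsimp : forall i, simple_submod (Us i) by move=> i; exact: (inv i.+1).1 i (ltnSn i).
have hsub : forall i, submod (Us i) by move=> i; case: (hsimp i).
pose D n y := exists N (z : nat -> M),
  (forall i, (i < N)%N -> ((n <= i)%N -> Us i (z i)) /\ ((i < n)%N -> z i = 0)) /\ y = \sum_(i < N) z i.
have subD' : forall n, submod (D n).
  move=> n; split.
  - by exists 0%N, (fun _ => 0); split => //; rewrite big_ord0.
  - move=> a b [N1 [z1 [h1 ->]]] [N2 [z2 [h2 ->]]].
    exists (N1 + N2)%N, (fun i => (if (i < N1)%N then z1 i else 0) + (if (i < N2)%N then z2 i else 0)).
    split.
      move=> i hi; split.
        move=> hni; apply: (subD (hsub i)).
          by case: ifP => hi1; [exact: (h1 i hi1).1 | exact: sub0 (hsub i)].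
        by case: ifP => hi2; [exact: (h2 i hi2).1 | exact: sub0 (hsub i)].
      move=> hin; case: ifP => hi1; case: ifP => hi2;
        rewrite ?(h1 i hi1).2 ?(h2 i hi2).2 ?addr0 //.
    by rewrite big_split /= !pad_sum // ?leq_addr ?leq_addl.
  - move=> r a [N [z [h ->]]]; exists N, (fun i => r *: z i); split.
      move=> i hi; split; first by move=> hni; exact (subZ (hsub i) _ ((h i hi).1 hni)).
      by move=> hin; rewrite (h i hi).2 // scaler0.
    by rewrite scaler_sumr.
have decD : forall n y, D n.+1 y -> D n y.
  move=> n y [N [z [h ->]]]; exists N, z; split => // i hi; split.
    rewrite leq_eqVlt => /orP [/eqP e|hni]; last exact: (h i hi).1.
    by subst i; rewrite (h n hi).2 //; exact: sub0 (hsub n).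
  by move=> hin; apply: (h i hi).2; exact: ltnW.
have [N0 hN0] := hd D subD' decD.
have [_ [y0 Uy0 ny0] _] := hsimp N0.
have DN0 : D N0 y0.
  exists N0.+1, (fun i => if i == N0 then y0 else 0); split.
    move=> i hi; split.
      move=> hni; have e : i = N0 by apply/eqP; rewrite eqn_leq -ltnS hi hni.
      by rewrite e eqxx.
    by move=> hin; rewrite ifN // neq_ltn hin.
  rewrite big_ord_recr /= eqxx big1 ?add0r // => i _.
  by rewrite ifN // neq_ltn ltn_ord.
have [N [z [hz ez]]] := proj2 (hN0 N0.+1 (leqnSn N0) y0) DN0.
case: (leqP N N0) => hN.
  move/eqP: ny0; apply; rewrite ez big1 // => i _; apply: (hz i (ltn_ord i)).2.
  exact: leq_trans (ltn_ord i) (leq_trans hN (leqnSn _)).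
pose w i := z i - (if i == N0 then y0 else 0).
have hw : forall i, (i < N)%N -> Us i (w i).
  move=> i hi; rewrite /w; case: (eqVneq i N0) => [->|hiN].
    by rewrite (hz N0 hN).2 // sub0r; exact (subN (hsub N0) Uy0).
  rewrite subr0; case: (ltnP i N0.+1) => h.
    by rewrite (hz i hi).2 //; exact: sub0 (hsub i).
  exact: (hz i hi).1.
have sw : \sum_(i < N) w i = 0.
  rewrite /w sumrB -ez (bigD1 (Ordinal hN)) //= eqxx big1 ?addr0 ?subrr //.
  move=> i hi; rewrite ifN //; apply: contra hi => /eqP e; apply/eqP; apply: val_inj; exact: e.
have := (inv N).2 w hw sw N0 hN.
rewrite /w eqxx (hz N0 hN).2 // sub0r => /eqP; rewrite oppr_eq0 => /eqP e.
by rewrite e eqxx in ny0.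
Qed.
End PartB2.

Section Cyc.
Variable R : nzRingType.
Variable M : lmodType R.
Variable u : M.

Definition ann (r : R^o) := r *: u = 0.
Lemma ann_submod : submod ann.
Proof.
rewrite /ann; split; first by rewrite scale0r.
- by move=> x y hx hy; rewrite scalerDl hx hy addr0.
- by move=> r x hx; rewrite -[r *: x]/(r * x) -scalerA hx scaler0.
Qed.

Local Notation cycQ := (quot_of ann_submod).
Definition cycf (q : cycQ) : M := (val q : R) *: u.
Lemma cycf_qpi (r : R^o) : cycf (qpi ann_submod r) = r *: u.
Proof.
rewrite /cycf; apply/eqP; rewrite -subr_eq0 -scalerBl; apply/eqP.
exact: (cong_val ann_submod r).
Qed.
Lemma cycD x y : cycf (x + y) = cycf x + cycf y.
Proof.
by elim/quot_ind: x => a; elim/quot_ind: y => b; rewrite -qpiD !cycf_qpi scalerDl.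
Qed.
Lemma cycZ (r : R) x : cycf (r *: x) = r *: cycf x.
Proof.
by elim/quot_ind: x => a; rewrite -qpiZ !cycf_qpi -scalerA.
Qed.
Definition cycL : {linear cycQ -> M} := mkLin cycD cycZ.
Lemma cycLE (r : R^o) : cycL (qpi ann_submod r) = r *: u.
Proof. exact: cycf_qpi. Qed.
Lemma cycL_inj q : cycL q = 0 -> q = 0.
Proof. elim/quot_ind: q => r; rewrite cycLE => h; exact/qpi0. Qed.
Lemma cyc_fg : fg cycQ.
Proof.
exists [:: qpi ann_submod 1] => q; elim/quot_ind: q => r.
exists (fun _ => r); rewrite big_ord1 /= -qpiZ; congr qpi.
by rewrite -[r *: 1]/(r * 1) mulr1.
Qed.
End Cyc.
Notation cycQ u := (quot_of (ann_submod u)).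

Section PartB3.
Variable R : nzRingType.
Variable S : lmodType R -> Prop.
Hypothesis Ssimple : forall X, S X -> simple_mod X.
Hypothesis Rart : left_artinian R.

Lemma cyc_simple (M : lmodType R) (V : M -> Prop) (u : M) :
  simple_submod V -> V u -> u != 0 -> simple_mod (cycQ u).
Proof.
move=> [subV _ hV] Vu nu; split.
  exists (qpi (ann_submod u) 1); apply/negP => /eqP e.
  by move: (cycLE u 1); rewrite e linear0 scale1r => e'; rewrite -e' eqxx in nu.
move=> W subW.
pose W' m := exists2 q, W q & m = cycL u q.
have subW' : submod W'.
  split; first by exists 0; [exact: sub0 subW | rewrite linear0].
  - by move=> a b [q hq ->] [q' hq' ->]; exists (q + q'); [exact (subD subW hq hq') | rewrite linearD].
  - by move=> r a [q hq ->]; exists (r *: q); [exact (subZ subW _ hq) | rewrite linearZ_LR].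
have W'V : forall m, W' m -> V m.
  move=> m [q _ ->]; elim/quot_ind: q => r; rewrite cycLE; exact (subZ subV _ Vu).
case: (hV _ subW' W'V) => [h|h]; [left|right] => q.
  by move=> Wq; apply: cycL_inj; apply: h; exists q.
have [q0 Wq0 e0] := proj2 (h u) Vu.
have e1 : q0 = qpi (ann_submod u) 1.
  apply/eqP; rewrite -subr_eq0; apply/eqP; apply: cycL_inj.
  by rewrite linearB cycLE scale1r -e0 subrr.
rewrite e1 in Wq0; move: Wq0 => W1; elim/quot_ind: q => r.
have -> : qpi (ann_submod u) r = (r : R) *: qpi (ann_submod u) 1.
  by rewrite -qpiZ; congr qpi; rewrite -[r *: 1]/(r * 1) mulr1.
exact (subZ subW _ W1).
Qed.

Lemma part_b_fwd (M : lmodType R) : fg M -> FS S M -> soc_in_add (Scompl S) M.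
Proof.
move=> fgM FSM.
have [n [U [hs hind hcov]]] := soc_finite Rart fgM.
pose u i := epsilon (inhabits (0 : M)) (fun x => U i x /\ x != 0).
have uP : forall i, (i < n)%N -> U i (u i) /\ u i != 0.
  move=> i hi; apply: (epsilon_spec (inhabits (0 : M)) (fun x => U i x /\ x != 0)).
  by case: (hs i hi) => _ [x hx nx] _; exists x.
have gen : forall i, (i < n)%N -> forall x, U i x -> exists r : R, x = r *: u i.
  move=> i hi x hx; case: (hs i hi) => subU _ hV.
  have hC : forall y, (exists r : R, y = r *: u i) -> U i y.
    by move=> y [r ->]; exact (subZ subU _ (uP i hi).1).
  case: (hV _ (cyc_submod (u i)) hC) => h.
    by exfalso; move: (uP i hi).2; rewrite (h (u i)) ?eqxx //; exists 1; rewrite scale1r.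
  exact: (proj2 (h x) hx).
exists n, (fun i : 'I_n => cycQ (u i)), (fun i => cycL (u i)); split.
- move=> i; have hsim := cyc_simple (hs i (ltn_ord i)) (uP i (ltn_ord i)).1 (uP i (ltn_ord i)).2.
  split => // [[Y SY iso]].
  have [g [h gK hK]] := mod_iso_sym iso.
  have := proj1 (FS_char Ssimple M) FSM Y SY (compL (cycL (u i)) g) (h (qpi (ann_submod (u i)) 1)).
  rewrite compLE hK cycLE scale1r => e.
  by move: (uP i (ltn_ord i)).2; rewrite e eqxx.
- move=> i q; exists 1%N, (fun _ => U i), (fun _ => cycL (u i) q); split.
  + by move=> _; exact: hs.
  + move=> _; elim/quot_ind: q => r; rewrite cycLE.
    by case: (hs i (ltn_ord i)) => subU _ _; exact (subZ subU _ (uP i (ltn_ord i)).1).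
  + by rewrite big_ord1.
- move=> y [m [V [xs [hV hx ->]]]].
  have subF : submod (spanF U n) by apply: spanF_submod => i hi; case: (hs i hi).
  have [z [hz ez]] : spanF U n (\sum_(j < m) xs j).
    by apply: (sub_sum subF) => j; exact: hcov _ (hV j) _ (hx j).
  pose r i := epsilon (inhabits (0 : R)) (fun r : R => z i = r *: u i).
  have rP : forall i, (i < n)%N -> z i = r i *: u i.
    move=> i hi; apply: (epsilon_spec (inhabits (0 : R)) (fun r : R => z i = r *: u i)).
    exact: gen i hi _ (hz i hi).
  exists (fun i : 'I_n => qpi (ann_submod (u i)) (r i)).
  by rewrite ez; apply: eq_bigr => i _; rewrite cycLE; exact: rP.
- move=> x x' e i.
  pose w (k : nat) : M := if (insub k : option 'I_n) is Some j then cycL (u j) (x j - x' j) else 0.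
  have hU : forall (j : 'I_n) q, U j (cycL (u j) q).
    move=> j; elim/quot_ind => r; rewrite cycLE.
    by case: (hs j (ltn_ord j)) => subU _ _; exact (subZ subU _ (uP j (ltn_ord j)).1).
  have hw : forall k, (k < n)%N -> U k (w k).
    move=> k hk; rewrite /w (insubT (fun k => (k < n)%N) hk) /=.
    exact: (hU (Sub k hk)).
  have wE : forall j : 'I_n, w j = cycL (u j) (x j - x' j) by move=> j; rewrite /w valK.
  have sw : \sum_(k < n) w k = 0.
    under eq_bigr do rewrite wE linearB.
    by rewrite sumrB e subrr.
  have := hind w hw sw i (ltn_ord i); rewrite wE => /cycL_inj /eqP.
  by rewrite subr_eq0 => /eqP.
Qed.
End PartB3.

Lemma sum_split (V : zmodType) n1 n2 (G : 'I_n1 + 'I_n2 -> V) :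
  \sum_(i < n1 + n2) G (split i) = \sum_(j < n1) G (inl j) + \sum_(j < n2) G (inr j).
Proof.
rewrite (reindex (@unsplit n1 n2)); last by exists split => x _; [exact: unsplitK | exact: splitK].
under eq_bigr do rewrite unsplitK.
by rewrite big_sumType.
Qed.

Section TraceClos.
Variable R : nzRingType.
Variable S : lmodType R -> Prop.

Lemma trace_submod (M : lmodType R) : submod (trace S (M:=M)).
Proof.
split.
- exists 0%N, (fun _ => M), (fun _ => @mkLin R M M (fun x => x) (fun x y => erefl) (fun r x => erefl)),
    (fun _ => 0); split; try by case.
  by rewrite big_ord0.
- move=> a b [n1 [T1 [f1 [t1 [fg1 ts1 ->]]]]] [n2 [T2 [f2 [t2 [fg2 ts2 ->]]]]].
  pose Ts (w : 'I_n1 + 'I_n2) := match w with inl j => T1 j | inr j => T2 j end.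
  pose fs (w : 'I_n1 + 'I_n2) : {linear Ts w -> M} :=
    match w with inl j => f1 j | inr j => f2 j end.
  pose ts (w : 'I_n1 + 'I_n2) : Ts w := match w with inl j => t1 j | inr j => t2 j end.
  exists (n1 + n2)%N, (fun i => Ts (split i)), (fun i => fs (split i)), (fun i => ts (split i)).
  split.
  + by move=> i; case: (split i).
  + by move=> i; case: (split i).
  + by rewrite (sum_split (fun w => fs w (ts w))).
- move=> r a [n [T [f [t [fgT tsT ->]]]]].
  exists n, T, f, (fun i => r *: t i); split => //.
  by rewrite scaler_sumr; apply: eq_bigr => i _; rewrite linearZ_LR.
Qed.

Lemma trace_image (M N : lmodType R) (g : {linear M -> N}) y : trace S y -> trace S (g y).
Proof.
move=> [n [T [f [t [fgT tsT ->]]]]]; exists n, T, (fun i => compL g (f i)), t; split => //.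
by rewrite linear_sum.
Qed.

Lemma ideal_submod (I : R -> Prop) (M : lmodType R) :
  (forall a x, I x -> I (a * x)) -> submod (ideal_times I (M:=M)).
Proof.
move=> hI; split.
- by exists 0%N, (fun _ => 0), (fun _ => 0); split; [case | rewrite big_ord0].
- move=> a b [n1 [r1 [m1 [h1 ->]]]] [n2 [r2 [m2 [h2 ->]]]].
  pose rs (w : 'I_n1 + 'I_n2) := match w with inl j => r1 j | inr j => r2 j end.
  pose ms (w : 'I_n1 + 'I_n2) := match w with inl j => m1 j | inr j => m2 j end.
  exists (n1 + n2)%N, (fun i => rs (split i)), (fun i => ms (split i)); split.
    by move=> i; case: (split i).
  by rewrite (sum_split (fun w => rs w *: ms w)).
- move=> c a [n [r [m [h ->]]]]; exists n, (fun i => c * r i), m; split.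
    by move=> i; apply: hI.
  by rewrite scaler_sumr; apply: eq_bigr => i _; rewrite scalerA.
Qed.

Lemma ideal_image (I : R -> Prop) (M N : lmodType R) (g : {linear M -> N}) y :
  ideal_times I y -> ideal_times I (g y).
Proof.
move=> [n [r [m [h ->]]]]; exists n, r, (fun i => g (m i)); split => //.
by rewrite linear_sum; apply: eq_bigr => i _; rewrite linearZ_LR.
Qed.

Lemma rmulL_D (a : R) (x y : R^o) : (x + y) * a = x * a + y * a.
Proof. exact: mulrDl. Qed.
Lemma rmulL_Z (a : R) (c : R) (x : R^o) : (c *: x) * a = c *: (x * a).
Proof. by rewrite -[c *: x]/(c * x) -mulrA. Qed.
Definition rmulL (a : R) : {linear R^o -> R^o} := mkLin (rmulL_D a) (rmulL_Z a).

Lemma actL_D (M : lmodType R) (m : M) (x y : R^o) : (x + y) *: m = x *: m + y *: m.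
Proof. exact: scalerDl. Qed.
Lemma actL_Z (M : lmodType R) (m : M) (c : R) (x : R^o) : (c *: x) *: m = c *: (x *: m).
Proof. by rewrite -[c *: x]/(c * x) -scalerA. Qed.
Definition actL (M : lmodType R) (m : M) : {linear R^o -> M} := mkLin (actL_D m) (actL_Z m).

Lemma IS_ideal : two_sided_ideal (IS S).
Proof.
have hT := trace_submod R^o; split.
- exact: sub0 hT.
- by move=> x y hx hy; exact (subD hT hx hy).
- by move=> a x hx; exact (subZ hT a hx).
- by move=> a x hx; exact: (trace_image (rmulL a) hx).
Qed.

Lemma ideal_to_trace (M : lmodType R) (y : M) : ideal_times (IS S) y -> trace S y.
Proof.
move=> [n [r [m [h ->]]]]; apply: (sub_sum (trace_submod M)) => i.
exact: (trace_image (actL (m i)) (h i)).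
Qed.
End TraceClos.

Section Zorn.
Variable R : nzRingType.

Lemma max_avoid (M : lmodType R) (V : M -> Prop) (a : M) :
  submod V -> ~ V a ->
  exists K : M -> Prop, [/\ submod K, (forall x, V x -> K x), ~ K a &
    forall W, submod W -> (forall x, K x -> W x) -> ~ W a -> forall x, W x -> K x].
Proof.
move=> subV nVa.
pose P (W : M -> Prop) := (forall x, ~ W x) \/ [/\ submod W, (forall x, V x -> W x) & ~ W a].
have [A [PA Amax]] : exists A, P A /\ forall B, classical_sets.proper A B -> ~ P B.
  apply: classical_sets.Zorn_bigcup => F FP Ftot.
  case: (classic (exists X, F X /\ exists x, X x)) => [[X0 [FX0 ne0]]|hno]; last first.
    left => x [X FX Xx]; apply: hno; exists X; split => //; by exists x.
  have goodX : forall X, F X -> (exists x, X x) -> [/\ submod X, (forall x, V x -> X x) & ~ X a].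
    by move=> X FX [x Xx]; case: (FP X FX) => // h; case: (h x Xx).
  right; split.
  - split.
    + by exists X0 => //; case: (goodX X0 FX0 ne0) => s _ _; exact: sub0 s.
    + move=> x y [X FX Xx] [Y FY Yy].
      case: (goodX X FX (ex_intro _ x Xx)) => sX _ _; case: (goodX Y FY (ex_intro _ y Yy)) => sY _ _.
      case: (Ftot X Y FX FY) => h.
        by exists Y => //; exact (subD sY (h x Xx) Yy).
      by exists X => //; exact (subD sX Xx (h y Yy)).
    + move=> r x [X FX Xx]; exists X => //.
      by case: (goodX X FX (ex_intro _ x Xx)) => sX _ _; exact (subZ sX _ Xx).
  - by move=> x Vx; exists X0 => //; case: (goodX X0 FX0 ne0) => _ h _; exact: h.
  - by move=> [X FX Xa]; case: (goodX X FX (ex_intro _ a Xa)).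
case: PA => [hA|[sA VA nAa]].
  exfalso; apply: (Amax V); last by right; split.
  split; first by move=> x /hA.
  by move=> h; apply: (hA 0); apply: h; exact: sub0 subV.
exists A; split => // W sW AW nWa x Wx; apply: NNPP => nAx.
apply: (Amax W); last by right; split => // y Vy; apply: AW; exact: VA.
by split => // h; apply: nAx; exact: h.
Qed.

Lemma exists_maximal (M : lmodType R) : fg M -> forall V : M -> Prop, submod V -> (exists x, ~ V x) ->
  exists K, maximal_submod K /\ forall x, V x -> K x.
Proof.
move=> /fg_spanL [s hs].
suff : forall V : M -> Prop, submod V -> (forall m, exists v y, [/\ V v, spanL s y & m = v + y]) ->
    (exists x, ~ V x) -> exists K, maximal_submod K /\ forall x, V x -> K x.
  move=> h V sV nV; apply: h => // m; exists 0, m; split => //; [exact: sub0 sV | by rewrite add0r].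
elim: s {hs} => [|a s IH] V sV cov [x0 nx0].
  by exfalso; apply: nx0; have [v [y [Vv /= -> ->]]] := cov x0; rewrite addr0.
pose V2 x := exists v (r : R), V v /\ x = v + r *: a.
have sV2 : submod V2.
  split.
  - by exists 0, 0; split; [exact: sub0 sV | rewrite scale0r addr0].
  - move=> x y [v [r [hv ->]]] [v' [r' [hv' ->]]]; exists (v + v'), (r + r'); split.
      exact (subD sV hv hv').
    by rewrite scalerDl addrACA.
  - move=> c x [v [r [hv ->]]]; exists (c *: v), (c * r); split; first exact (subZ sV _ hv).
    by rewrite scalerDr scalerA.
have VV2 : forall x, V x -> V2 x by move=> x hx; exists x, 0; split => //; rewrite scale0r addr0.
case: (classic (exists x, ~ V2 x)) => [nV2|hall].
  have cov2 : forall m, exists v y, [/\ V2 v, spanL s y & m = v + y].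
    move=> m; have [v [y [Vv [r [y' [hy' ->]]] ->]]] := cov m.
    exists (v + r *: a), y'; split => //; first by exists v, r.
    by rewrite addrA.
  have [K [mK hK]] := IH V2 sV2 cov2 nV2.
  by exists K; split => // x /VV2 /hK.
have allV2 : forall x, V2 x by move=> x; apply: NNPP => h; apply: hall; exists x.
have nVa : ~ V a.
  move=> Va; apply: nx0; have [v [r [hv ->]]] := allV2 x0; exact (subD sV hv (subZ sV _ Va)).
have [K [sK VK nKa Kmax]] := max_avoid sV nVa.
exists K; split => //; split => //; first by exists a.
move=> W sW KW; case: (classic (W a)) => Wa; [right|left] => x.
  have [v [r [hv ->]]] := allV2 x; exact (subD sW (KW _ (VK _ hv)) (subZ sW _ Wa)).
by split; [exact: Kmax | exact: KW].
Qed.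
End Zorn.

Section PartD.
Variable R : nzRingType.
Variable S : lmodType R -> Prop.
Hypothesis Ssimple : forall X, S X -> simple_mod X.
Hypothesis Rart : left_artinian R.

Lemma qpi_one (u : R^o) (r : R) : qpi (ann_submod u) r = r *: qpi (ann_submod u) 1.
Proof. by rewrite -qpiZ; congr qpi; rewrite -[r *: 1]/(r * 1) mulr1. Qed.

Lemma TS_ideal (T : lmodType R) : fg T -> TS S T -> forall t : T, ideal_times (IS S) t.
Proof.
move=> fgT TST t; apply: NNPP => nt.
have [_ _ IS_left _] := IS_ideal S.
have sVt : submod (ideal_times (IS S) (M:=T)) := ideal_submod T IS_left.
have [K [[sK [s nKs] Kmax] VK]] := exists_maximal fgT sVt (ex_intro _ t nt).
pose L (r : R^o) := K (r *: s).
have sL : submod L.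
  rewrite /L; split; first by rewrite scale0r; exact: sub0 sK.
  - by move=> x y hx hy; rewrite scalerDl; exact (subD sK hx hy).
  - by move=> c x hx; rewrite -[c *: x]/(c * x) -scalerA; exact (subZ sK _ hx).
pose P (J : R^o -> Prop) := submod J /\ exists2 x, J x & ~ L x.
have PT : P (fun _ => True).
  split => //; exists 1 => //; rewrite /L scale1r; exact: nKs.
have [I [[sI [u Iu nLu]] Imin]] := dcc_min (dcc_R Rart) (fun J (h : P J) => h.1) (ex_intro _ _ PT).
have uIS : IS S u.
  exists 1%N, (fun _ => cycQ u), (fun _ => cycL u), (fun _ => qpi (ann_submod u) 1); split.
  - by move=> _; exact: cyc_fg.
  - move=> _; apply/(TS_char Ssimple) => Y SY h q; apply/eqP; apply: NNPP => /negP hq.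
    pose pq := qpi (ann_submod u).
    have h1 : h (pq 1) != 0.
      apply: contra hq => /eqP h0; elim/quot_ind: q => r.
      by rewrite qpi_one linearZ_LR h0 scaler0.
    pose J2 (r : R^o) := h (pq r) = 0.
    have J2L : forall r, J2 r -> L (r * u).
      move=> r hr.
      pose J (x : R^o) := exists2 c, J2 c & x = c * u.
      have sJ : submod J.
        split; first by exists 0; [rewrite /J2 /pq -[qpi _ 0]/(qpiL _ 0) !linear0 | rewrite mul0r].
        - move=> x y [c hc ->] [c' hc' ->]; exists (c + c'); last by rewrite mulrDl.
          by rewrite /J2 /pq qpiD linearD hc hc' addr0.
        - move=> a x [c hc ->]; exists (a * c); last by rewrite -[a *: _]/(a * _) mulrA.
          by rewrite /J2 /pq -[a * c]/(a *: c) qpiZ linearZ_LR hc scaler0.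
      have JI : forall x, J x -> I x.
        by move=> x [c _ ->]; exact (subZ sI c Iu).
      case: (classic (exists2 x, J x & ~ L x)) => [hx|hno].
        have [c hc ec] := Imin J (conj sJ hx) JI u Iu.
        exfalso; move/negP: h1; apply; apply/eqP.
        have -> : pq 1 = pq c.
          apply: qpi_eq; rewrite /ann -[_ *: u]/(_ * u) mulrBl mul1r -ec subrr //.
        exact: hc.
      by apply: NNPP => nL; apply: hno; exists (r * u) => //; exists r.
    have LJ2 : forall r, L (r * u) -> J2 r.
      move=> r hr; apply: NNPP => nr.
      have [c hc] := simple_gen (Ssimple SY) (introN eqP nr) (h (pq 1)).
      have hJ : J2 (1 - c * r).
        by rewrite /J2 /pq qpiB; rewrite -[c * r]/(c *: r) qpiZ linearB linearZ_LR -hc subrr.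
      have := subD sL (J2L _ hJ) (subZ sL c hr).
      rewrite -[c *: (r * u)]/(c * (r * u)) mulrA -mulrDl subrK mul1r.
      exact: nLu.
    pose s' := u *: s.
    have cover : forall x, exists r : R, K (x - r *: s').
      move=> x.
      pose V x := exists k (r : R), K k /\ x = k + r *: s'.
      have sV : submod V.
        split; first by exists 0, 0; split; [exact: sub0 sK | rewrite scale0r addr0].
        - move=> a b [k [r [hk ->]]] [k' [r' [hk' ->]]]; exists (k + k'), (r + r'); split.
            exact (subD sK hk hk').
          by rewrite scalerDl addrACA.
        - move=> c a [k [r [hk ->]]]; exists (c *: k), (c * r); split; first exact (subZ sK _ hk).
          by rewrite scalerDr scalerA.
      have KV : forall x, K x -> V x by move=> y hy; exists y, 0; split => //; rewrite scale0r addr0.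
      case: (Kmax V sV KV) => [e|hall].
        exfalso; apply: nLu; apply/e; exists 0, 1; split; [exact: sub0 sK | by rewrite scale1r add0r].
      have [k [r [hk ->]]] := hall x; exists r; by rewrite addrK.
    have wd : forall x r r', K (x - r *: s') -> K (x - r' *: s') -> h (pq r) = h (pq r').
      move=> x r r' h1' h2'.
      have := subB sK h2' h1'.
      rewrite [x - r' *: s']addrC addrKA opprK addrC -scalerBl => hK.
      have : J2 (r - r').
        apply: LJ2; rewrite /L -[(r - r') * u]/((r - r') *: u) -scalerA.
        exact: hK.
      by rewrite /J2 /pq qpiB linearB => /eqP; rewrite subr_eq0 => /eqP.
    pose pre x := epsilon (inhabits (0 : R)) (fun r : R => K (x - r *: s')).
    have preP : forall x, K (x - pre x *: s').
      by move=> x; apply: (epsilon_spec (inhabits (0 : R)) (fun r : R => K (x - r *: s'))).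
    have FD : forall x y, h (pq (pre (x + y))) = h (pq (pre x)) + h (pq (pre y)).
      move=> x y; rewrite -linearD -qpiD; apply: (wd (x + y)) => //.
      by have := subD sK (preP x) (preP y); rewrite scalerDl opprD addrACA.
    have FZ : forall (c : R) x, h (pq (pre (c *: x))) = c *: h (pq (pre x)).
      move=> c x; rewrite -linearZ_LR /pq -(qpiZ (ann_submod u) c (pre x : R^o)); apply: (wd (c *: x)) => //.
      have := subZ sK c (preP x); rewrite scalerBr scalerA => H; exact: H.
    have e : h (pq (pre s')) = 0 := proj1 (TS_char Ssimple T) TST Y SY (mkLin FD FZ) s'.
    have k1 : K (s' - 1 *: s') by rewrite scale1r subrr; exact: sub0 sK.
    rewrite (@wd s' (pre s') 1 (preP s') k1) in e.
    by rewrite e eqxx in h1.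
  - by rewrite big_ord1 cycLE scale1r.
apply: nLu; apply: VK; exists 1%N, (fun _ => u), (fun _ => s); split => //.
by rewrite big_ord1.
Qed.
End PartD.

Theorem proposition3p9 (R : nzRingType) (S : lmodType R -> Prop) :
  left_artinian R ->
  (forall X, S X -> simple_mod X) ->
  [/\ (* (a) *)
      (forall M : lmodType R, fg M -> (TS S M <-> top_in_add (Scompl S) M)),
      (* (b) *)
      (forall M : lmodType R, fg M -> (FS S M <-> soc_in_add (Scompl S) M)),
      (* (c) *)
      (forall (M P : lmodType R) (pi : {linear P -> M}),
          fg M -> TS S M -> projective_cover pi -> TS S P) &
      (* (d) *)
      (two_sided_ideal (IS S) /\
       forall M : lmodType R, fg M ->
         forall y : M, trace S y <-> ideal_times (IS S) y)].
Proof.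
move=> Rart Ssimple; split.
- move=> M fgM; split; [exact: part_a_fwd | exact: part_a_back].
- move=> M fgM; split; [exact: part_b_fwd | exact: part_b_back].
- move=> M P pi; exact: part_c.
- split; first exact: IS_ideal.
  move=> M fgM y; split; last exact: ideal_to_trace.
  move=> [n [T [f [t [fgT tsT ->]]]]].
  have [_ _ IS_left _] := IS_ideal S.
  apply: (sub_sum (ideal_submod M IS_left)) => i.
  exact: ideal_image (TS_ideal Ssimple Rart (fgT i) (tsT i) (t i)).
Qed.
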